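(* Let $d\ge1$, $n\ge3$, $u\in\mathbb{C}\setminus\{0\}$. In $\mathrm{Y}_{d,n}(u)$: (1) $g_1r_{1,2}=[1+(u-1)e_1]r_{1,2}$; (2) $g_2r_{1,2}=[1+(u-1)e_2]r_{1,2}$; (3) $g_1g_2r_{1,2}=[1+(u-1)e_1+(u-1)e_{1,3}+(u-1)^2e_1e_2]r_{1,2}$; (4) $g_2g_1r_{1,2}=[1+(u-1)e_2+(u-1)e_{1,3}+(u-1)^2e_1e_2]r_{1,2}$; (5) $g_1g_2g_1r_{1,2}=[1+(u-1)(e_1+e_2+e_{1,3})+(u-1)^2(u+2)e_1e_2]r_{1,2}$.
   Context: The Yokonuma–Hecke algebra $\mathrm{Y}_{d,n}(u)$ is the unital associative $\mathbb{C}$-algebra with generators $g_1,\ldots,g_{n-1},t_1,\ldots,t_n$ and relations: $g_ig_j=g_jg_i$ for $|i-j|>1$; $g_{i+1}g_ig_{i+1}=g_ig_{i+1}g_i$; $t_it_j=t_jt_i$; $t_i^d=1$; $g_it_i=t_{i+1}g_i$; $g_it_{i+1}=t_ig_i$; $g_it_j=t_jg_i$ for $j\ne i,i+1$; $g_i^2=1+(u-1)e_i+(u-1)e_ig_i$, where $e_i=\frac1d\sum_{s=0}^{d-1}t_i^st_{i+1}^{d-s}$. Also $e_{i,j}=\frac1d\sum_{s=0}^{d-1}t_i^st_j^{d-s}$. For $w\in S_n$ with reduced expression $s_{i_1}\cdots s_{i_k}$ put $g_w=g_{i_1}\cdots g_{i_k}$; $g_{1,2}=\sum_{w\in S_3}g_w$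 and $r_{1,2}=\sum_{a,b=0}^{d-1}t_1^{a}t_2^{b-a}t_3^{-b}\,g_{1,2}$. *)

(* Defs.v *)
From HB Require Import structures.
From mathcomp Require Import all_boot all_algebra.
From mathcomp Require Import complex Rstruct.
Set Implicit Arguments. Unset Strict Implicit. Unset Printing Implicit Defensive.
Import GRing.Theory Num.Theory.
Local Open Scope ring_scope.

Definition CC : numClosedFieldType := (Rdefinitions.R)[i].

Section YH.
Variables (A : algType CC) (d : nat) (t g : nat -> A).

Definition eij (i j : nat) : A :=
  (d%:R : CC)^-1 *: \sum_(s < d) (t i ^+ s * t j ^+ (d - s)%N).

Definition ei (i : nat) : A := eij i i.+1.

(* integer powers of a d-th root of unity: x^k := x^(k mod d) *)
Definition tpow (x : A) (k : int) : A := x ^+ `|(k %% d%:Z)%Z|%N.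

(* g_{1,2} = sum_{w in S_3} g_w *)
Definition g12 : A :=
  1 + g 1%N + g 2%N + g 1%N * g 2%N + g 2%N * g 1%N + g 1%N * g 2%N * g 1%N.

Definition r12 : A :=
  \sum_(a < d) \sum_(b < d)
     (tpow (t 1%N) a%:Z * tpow (t 2%N) (b%:Z - a%:Z) * tpow (t 3%N) (- b%:Z)) * g12.

Definition YH_rels (n : nat) (u : CC) : Prop :=
  (forall i j, (1 <= i < n)%N -> (1 <= j < n)%N ->
     (i.+1 < j)%N || (j.+1 < i)%N -> g i * g j = g j * g i) /\
  (forall i, (1 <= i)%N -> (i.+1 < n)%N ->
     g i.+1 * g i * g i.+1 = g i * g i.+1 * g i) /\
  (forall i j, (1 <= i <= n)%N -> (1 <= j <= n)%N -> t i * t j = t j * t i) /\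
  (forall i, (1 <= i <= n)%N -> t i ^+ d = 1) /\
  (forall i, (1 <= i < n)%N -> g i * t i = t i.+1 * g i) /\
  (forall i, (1 <= i < n)%N -> g i * t i.+1 = t i * g i) /\
  (forall i j, (1 <= i < n)%N -> (1 <= j <= n)%N -> j != i -> j != i.+1 ->
     g i * t j = t j * g i) /\
  (forall i, (1 <= i < n)%N ->
     g i ^+ 2 = 1 + (u - 1) *: ei i + (u - 1) *: (ei i * g i)).

End YH.

(* Main.v *)
Require Import Defs.
From HB Require Import structures.
From mathcomp Require Import all_boot all_algebra.
From mathcomp Require Import complex Rstruct zify ring.
Import GRing.Theory Num.Theory.
Local Open Scope ring_scope.
Set Implicit Arguments. Unset Strict Implicit.

Definition FF (A : algType CC) (d : nat) (x y : A) : A :=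
  \sum_(s < d) (x ^+ s * y ^+ (d - s)).
Arguments FF {A}.
Definition EE (A : algType CC) (d : nat) (x y : A) : A :=
  (d%:R : CC)^-1 *: FF d x y.
Arguments EE {A}.

Lemma commZ (A : algType CC) (c : CC) (a x : A) : GRing.comm a x -> GRing.comm a (c *: x).
Proof. by move=> h; rewrite /GRing.comm -scalerAr -scalerAl h. Qed.

Lemma comm_FF (A : algType CC) d (a x y : A) :
  GRing.comm a x -> GRing.comm a y -> GRing.comm a (FF d x y).
Proof.
move=> hx hy; apply: commr_sum => s _; apply: commrM; exact: commrX.
Qed.

Lemma comm_EE (A : algType CC) d (a x y : A) :
  GRing.comm a x -> GRing.comm a y -> GRing.comm a (EE d x y).
Proof. by move=> hx hy; apply: commZ; apply: comm_FF. Qed.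

Lemma FF_abs (A : algType CC) d (x y : A) :
  GRing.comm x y -> x ^+ d = 1 -> y ^+ d = 1 -> x * FF d x y = y * FF d x y.
Proof.
move=> cxy; case: d => [|n] hx hy; first by rewrite /FF !big_ord0 !mulr0.
rewrite /FF !mulr_sumr.
rewrite big_ord_recr big_ord_recl /=.
rewrite subSnn subn0 expr1 expr0 mul1r hy mulr1 mulrA -exprS hx mul1r addrC.
congr (_ + _); apply: eq_bigr => i _.
rewrite /bump /= add1n mulrA -exprS.
have cy : GRing.comm y (x ^+ i.+1) by apply: commrX; apply: commr_sym.
rewrite mulrA cy -mulrA -exprS; congr (_ * _ ^+ _).
have := ltn_ord i; lia.
Qed.

Lemma EE_abs (A : algType CC) d (x y : A) :
  GRing.comm x y -> x ^+ d = 1 -> y ^+ d = 1 -> x * EE d x y = y * EE d x y.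
Proof. by move=> c hx hy; rewrite /EE -!scalerAr FF_abs. Qed.

Lemma EE_absX (A : algType CC) d (x y : A) k :
  GRing.comm x y -> x ^+ d = 1 -> y ^+ d = 1 -> x ^+ k * EE d x y = y ^+ k * EE d x y.
Proof.
move=> c hx hy; elim: k => [|k IH]; first by rewrite !expr0.
rewrite !exprS -!mulrA IH !mulrA.
have cxk : GRing.comm x (y ^+ k) by apply: commrX.
by rewrite cxk -mulrA EE_abs // mulrA -(commrX k (commr_refl y)).
Qed.

Lemma FF_EE (A : algType CC) d (x y : A) :
  GRing.comm x y -> x ^+ d = 1 -> y ^+ d = 1 -> FF d x y * EE d x y = d%:R *: EE d x y.
Proof.
move=> c hx hy; rewrite /FF mulr_suml.
rewrite (eq_bigr (fun _ => EE d x y)); first by rewrite sumr_const card_ord scaler_nat.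
move=> s _; have cs : GRing.comm (x ^+ s) (y ^+ (d - s)) by apply: commrX; apply: commr_sym; apply: commrX; apply: commr_sym.
rewrite cs -mulrA EE_absX // mulrA -exprD subnK ?hy ?mul1r //; exact: ltnW.
Qed.

Lemma FF_EE' (A : algType CC) d (x y : A) :
  GRing.comm x y -> x ^+ d = 1 -> y ^+ d = 1 -> FF d y x * EE d x y = d%:R *: EE d x y.
Proof.
move=> c hx hy; rewrite /FF mulr_suml.
rewrite (eq_bigr (fun _ => EE d x y)); first by rewrite sumr_const card_ord scaler_nat.
move=> s _.
rewrite -mulrA EE_absX // mulrA -exprD addnC subnK ?hy ?mul1r //; exact: ltnW.
Qed.

Lemma dnz d : (0 < d)%N -> (d%:R : CC) != 0.
Proof. by move=> h; rewrite pnatr_eq0 -lt0n. Qed.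

Lemma EE_idem (A : algType CC) d (x y : A) : (0 < d)%N ->
  GRing.comm x y -> x ^+ d = 1 -> y ^+ d = 1 -> EE d x y * EE d x y = EE d x y.
Proof.
move=> d0 c hx hy; rewrite {1}/EE -scalerAl FF_EE // scalerA mulVf ?scale1r //.
exact: dnz.
Qed.

Lemma EE_swabs (A : algType CC) d (x y : A) : (0 < d)%N ->
  GRing.comm x y -> x ^+ d = 1 -> y ^+ d = 1 -> EE d y x * EE d x y = EE d x y.
Proof.
move=> d0 c hx hy.
by rewrite {1}/EE -scalerAl FF_EE' // scalerA mulVf ?scale1r //; exact: dnz.
Qed.

Lemma EE_sym (A : algType CC) d (x y : A) : (0 < d)%N ->
  GRing.comm x y -> x ^+ d = 1 -> y ^+ d = 1 -> EE d x y = EE d y x.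
Proof.
move=> d0 c hx hy.
have c' := commr_sym c.
have c2 : GRing.comm (EE d x y) (EE d y x).
  by apply: comm_EE; apply: commr_sym; apply: comm_EE => //; exact: commr_refl.
by rewrite -(EE_swabs d0 c) // -c2 EE_swabs.
Qed.

Lemma EE_L1 (A : algType CC) d (x y z : A) :
  GRing.comm x y -> GRing.comm x z -> GRing.comm y z ->
  x ^+ d = 1 -> y ^+ d = 1 -> z ^+ d = 1 ->
  EE d x z * EE d x y = EE d y z * EE d x y.
Proof.
move=> cxy cxz cyz hx hy hz; rewrite /EE -!scalerAl; congr (_ *: _).
rewrite /FF !mulr_suml; apply: eq_bigr => s _.
have c1 : GRing.comm (x ^+ s) (z ^+ (d - s)) by apply: commrX; apply: commr_sym; apply: commrX; apply: commr_sym.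
have c2 : GRing.comm (y ^+ s) (z ^+ (d - s)) by apply: commrX; apply: commr_sym; apply: commrX; apply: commr_sym.
rewrite c1 c2 -!mulrA; congr (_ * _).
exact: (EE_absX s cxy hx hy).
Qed.

Lemma gX (A : algType CC) (g x x' : A) k : g * x = x' * g -> g * x ^+ k = x' ^+ k * g.
Proof.
move=> h; elim: k => [|k IH]; first by rewrite !expr0 mul1r mulr1.
by rewrite exprSr mulrA IH -mulrA h mulrA -exprSr.
Qed.

Lemma gEE (A : algType CC) d (g x y x' y' : A) :
  g * x = x' * g -> g * y = y' * g -> g * EE d x y = EE d x' y' * g.
Proof.
move=> hx hy; rewrite /EE -scalerAl -scalerAr /FF mulr_sumr mulr_suml; congr (_ *: _).
apply: eq_bigr => s _; by rewrite mulrA (gX s hx) -mulrA (gX _ hy) mulrA.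
Qed.

Unset Implicit Arguments. Set Strict Implicit.

Lemma tpowE (A : algType CC) d (x : A) (k : int) (m : nat) :
  x ^+ d = 1 -> (k %% d%:Z)%Z = (m%:Z %% d%:Z)%Z -> tpow d x k = x ^+ m.
Proof. by move=> hx hk; rewrite /tpow hk modz_nat absz_nat expr_mod. Qed.

Lemma r12E (A : algType CC) d (t g : nat -> A) :
  t 1%N ^+ d = 1 -> t 2%N ^+ d = 1 -> t 3%N ^+ d = 1 ->
  r12 d t g = FF d (t 1%N) (t 2%N) * FF d (t 2%N) (t 3%N) * g12 g.
Proof.
move=> h1 h2 h3; rewrite /r12 /FF mulr_suml mulr_suml; apply: eq_bigr => a _.
rewrite mulr_sumr mulr_suml; apply: eq_bigr => b _.
have ha := ltn_ord a; have hb := ltn_ord b.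
rewrite (@tpowE _ d _ a%:Z a) // (@tpowE _ d _ (b%:Z - a%:Z) (d - a + b)) //; last first.
  have -> : (b%:Z - a%:Z = (-1) * d%:Z + (d - a + b)%N%:Z)%R by lia.
  by rewrite modzMDl.
rewrite (@tpowE _ d _ (- b%:Z) (d - b)) //; last first.
  have -> : (- b%:Z = (-1) * d%:Z + (d - b)%N%:Z)%R by lia.
  by rewrite modzMDl.
by rewrite exprD !mulrA.
Qed.

Lemma sc2 (A : algType CC) (x y z : A) (a b : CC) : (a *: x) * (b *: y) * z = (a * b) *: (x * y * z).
Proof. by rewrite -!scalerAl -!scalerAr -!scalerAl scalerA. Qed.

Lemma combW (A : algType CC) (X Y W : A) (c : CC) : X * W + c *: (Y * W) = (X + c *: Y) * W.
Proof. by rewrite mulrDl scalerAl. Qed.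

Theorem lemma5 (d n : nat) (u : CC) (A : algType CC) (t g : nat -> A) :
  (1 <= d)%N -> (3 <= n)%N -> u != 0 -> YH_rels d t g n u ->
  let e1 := ei d t 1%N in let e2 := ei d t 2%N in let e13 := eij d t 1%N 3%N in
  let r := r12 d t g in
  [/\ g 1%N * r = (1 + (u - 1) *: e1) * r,
      g 2%N * r = (1 + (u - 1) *: e2) * r,
      g 1%N * g 2%N * r = (1 + (u - 1) *: e1 + (u - 1) *: e13 + (u - 1) ^+ 2 *: (e1 * e2)) * r,
      g 2%N * g 1%N * r = (1 + (u - 1) *: e2 + (u - 1) *: e13 + (u - 1) ^+ 2 *: (e1 * e2)) * r &
      g 1%N * g 2%N * g 1%N * r =
        (1 + (u - 1) *: (e1 + e2 + e13) + ((u - 1) ^+ 2 * (u + 2)) *: (e1 * e2)) * r].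
Proof.
move=> d0 n3 _ [hgg [hbr [htt [htd [hgt1 [hgt2 [hgt3 hsq]]]]]]] e1 e2 e13 r.
have c12 : GRing.comm (t 1%N) (t 2%N) by apply: htt; lia.
have c13 : GRing.comm (t 1%N) (t 3%N) by apply: htt; lia.
have c23 : GRing.comm (t 2%N) (t 3%N) by apply: htt; lia.
have h1 : t 1%N ^+ d = 1 by apply: htd; lia.
have h2 : t 2%N ^+ d = 1 by apply: htd; lia.
have h3 : t 3%N ^+ d = 1 by apply: htd; lia.
have g1t1 : g 1%N * t 1%N = t 2%N * g 1%N by apply: hgt1; lia.
have g1t2 : g 1%N * t 2%N = t 1%N * g 1%N by apply: hgt2; lia.
have g1t3 : g 1%N * t 3%N = t 3%N * g 1%N by apply: hgt3; lia.
have g2t2 : g 2%N * t 2%N = t 3%N * g 2%N by apply: hgt1; lia.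
have g2t3 : g 2%N * t 3%N = t 2%N * g 2%N by apply: hgt2; lia.
have g2t1 : g 2%N * t 1%N = t 1%N * g 2%N by apply: hgt3; lia.
have br : g 2%N * g 1%N * g 2%N = g 1%N * g 2%N * g 1%N by apply: hbr; lia.
have sq1 : g 1%N ^+ 2 = 1 + (u - 1) *: ei d t 1 + (u - 1) *: (ei d t 1 * g 1%N).
  by apply: hsq; lia.
have sq2 : g 2%N ^+ 2 = 1 + (u - 1) *: ei d t 2 + (u - 1) *: (ei d t 2 * g 2%N).
  by apply: hsq; lia.
rewrite -/e1 in sq1; rewrite -/e2 in sq2.
have E1 : e1 = EE d (t 1%N) (t 2%N) by [].
have E2 : e2 = EE d (t 2%N) (t 3%N) by [].
have E13 : e13 = EE d (t 1%N) (t 3%N) by [].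
have c21 := commr_sym c12. have c31 := commr_sym c13. have c32 := commr_sym c23.
have ce12 : GRing.comm e1 e2.
  by rewrite E1 E2; apply: comm_EE; apply: commr_sym; apply: comm_EE.
have ce113 : GRing.comm e1 e13.
  by rewrite E1 E13; apply: comm_EE; apply: commr_sym; apply: comm_EE => //; exact: commr_refl.
have ce213 : GRing.comm e2 e13.
  by rewrite E2 E13; apply: comm_EE; apply: commr_sym; apply: comm_EE => //; exact: commr_refl.
have I1 : e1 * e13 = e1 * e2.
  by rewrite ce113 ce12 E1 E2 E13 EE_L1.
have I2 : e13 * e2 = e1 * e2.
  rewrite E1 E2 E13 (EE_sym d0 c13 h1 h3) (EE_sym d0 c23 h2 h3) (EE_sym d0 c12 h1 h2).
  by rewrite EE_L1.
have I3 : e2 * e2 = e2 by rewrite E2 EE_idem.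
have g1e1 : g 1%N * e1 = e1 * g 1%N by rewrite E1 (gEE _ g1t1 g1t2) -EE_sym.
have g1e2 : g 1%N * e2 = e13 * g 1%N by rewrite E2 (gEE _ g1t2 g1t3).
have g1e13 : g 1%N * e13 = e2 * g 1%N by rewrite E13 (gEE _ g1t1 g1t3).
have g2e1 : g 2%N * e1 = e13 * g 2%N by rewrite E1 (gEE _ g2t1 g2t2).
have g2e2 : g 2%N * e2 = e2 * g 2%N by rewrite E2 (gEE _ g2t2 g2t3) -EE_sym.
pose K := e1 * e2.
pose G := g12 g.
pose W := K * G.
have FFE : forall x y : A, FF d x y = d%:R *: EE d x y.
  by move=> x y; rewrite /EE scalerA mulfV ?scale1r // dnz.
have rE : r = (d%:R * d%:R) *: W.
  by rewrite /r r12E // !FFE -E1 -E2 sc2.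
have cKe1 : GRing.comm K e1.
  by apply: commr_sym; apply: commrM => //; exact: commr_refl.
have cKe2 : GRing.comm K e2.
  by apply: commr_sym; apply: commrM => //; exact: commr_refl.
have gK1 : g 1%N * K = K * g 1%N.
  by rewrite /K mulrA g1e1 -mulrA g1e2 mulrA I1 -mulrA.
have gK2 : g 2%N * K = K * g 2%N.
  by rewrite /K mulrA g2e1 -mulrA g2e2 mulrA I2 -mulrA.
have FG1 : G = (1 + g 1%N) * (1 + g 2%N + g 2%N * g 1%N).
  rewrite /G /g12 mulrDl !mul1r !mulrDr !mulr1 !mulrA.
  rewrite !addrA; congr (_ + _); rewrite [LHS]addrAC; congr (_ + _).
  by rewrite [1 + _ + _]addrAC [LHS]addrAC.
have FG2 : G = (1 + g 2%N) * (1 + g 1%N + g 1%N * g 2%N).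
  rewrite /G /g12 mulrDl !mul1r !mulrDr !mulr1 !mulrA br.
  by rewrite !addrA; congr (_ + _ + _); rewrite addrAC.
have S1 : g 1%N * (1 + g 1%N) = (1 + (u - 1) *: e1) * (1 + g 1%N).
  rewrite mulrDr mulr1 -expr2 sq1 mulrDl mul1r mulrDr mulr1 scalerAl.
  by rewrite !addrA [g _ + 1]addrC.
have S2 : g 2%N * (1 + g 2%N) = (1 + (u - 1) *: e2) * (1 + g 2%N).
  rewrite mulrDr mulr1 -expr2 sq2 mulrDl mul1r mulrDr mulr1 scalerAl.
  by rewrite !addrA [g _ + 1]addrC.
have gG1 : g 1%N * G = (1 + (u - 1) *: e1) * G.
  by rewrite {1}FG1 mulrA S1 -mulrA -FG1.
have gG2 : g 2%N * G = (1 + (u - 1) *: e2) * G.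
  by rewrite {1}FG2 mulrA S2 -mulrA -FG2.
have P1 : g 1%N * W = (1 + (u - 1) *: e1) * W.
  rewrite /W mulrA gK1 -mulrA gG1 mulrA (commrD (commr1 K) (commZ (u - 1) cKe1)).
  by rewrite -mulrA.
have P2 : g 2%N * W = (1 + (u - 1) *: e2) * W.
  rewrite /W mulrA gK2 -mulrA gG2 mulrA (commrD (commr1 K) (commZ (u - 1) cKe2)).
  by rewrite -mulrA.
have Ke : e13 * e1 = K by rewrite -ce113 I1.
have P3 : g 1%N * g 2%N * W =
    (1 + (u - 1) *: e1 + (u - 1) *: e13 + (u - 1) ^+ 2 *: (e1 * e2)) * W.
  rewrite -mulrA P2 mulrA mulrDr mulr1 -scalerAr g1e2 mulrDl -scalerAl -mulrA P1.
  rewrite (mulrA e13) combW; congr (_ * _).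
  rewrite mulrDr mulr1 -scalerAr Ke scalerDr [(u - 1) *: (_ *: K)]scalerA -expr2.
  by rewrite !addrA.
have P4 : g 2%N * g 1%N * W =
    (1 + (u - 1) *: e2 + (u - 1) *: e13 + (u - 1) ^+ 2 *: (e1 * e2)) * W.
  rewrite -mulrA P1 mulrA mulrDr mulr1 -scalerAr g2e1 mulrDl -scalerAl -mulrA P2.
  rewrite (mulrA e13) combW; congr (_ * _).
  rewrite mulrDr mulr1 -scalerAr I2 scalerDr [(u - 1) *: (_ *: (e1 * e2))]scalerA -expr2.
  by rewrite !addrA.
have e2K : e2 * K = K by rewrite /K mulrA -ce12 -mulrA I3.
have e2e1 : e2 * e1 = K by rewrite -ce12.
have e2e13 : e2 * e13 = K by rewrite ce213 I2.
have P5 : g 1%N * g 2%N * g 1%N * W =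
    (1 + (u - 1) *: (e1 + e2 + e13) + ((u - 1) ^+ 2 * (u + 2)) *: (e1 * e2)) * W.
  rewrite -mulrA P1 mulrA mulrDr mulr1 -scalerAr.
  have -> : g 1%N * g 2%N * e1 = e2 * (g 1%N * g 2%N).
    by rewrite -mulrA g2e1 mulrA g1e13 -mulrA.
  rewrite mulrDl -scalerAl -(mulrA e2) P3 (mulrA e2) combW; congr (_ * _).
  have -> : (u - 1) ^+ 2 * (u + 2) =
     (u - 1) ^+ 2 + (u - 1) * (u - 1) + (u - 1) * (u - 1) + (u - 1) * (u - 1) ^+ 2 by ring.
  rewrite -/K !(mulrDr e2) (mulr1 e2) -(scalerAr _ e2 e1) -(scalerAr _ e2 e13) -(scalerAr _ e2 K) e2e1 e2e13 e2K !scalerDr.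
  rewrite !(scalerA (u - 1) _ K).
  rewrite !(scalerDl K) !addrA; congr (_ + _ + _ + _).
  by rewrite [LHS]addrAC; congr (_ + _); rewrite [LHS]addrAC.
have sc : forall X, X * r = (d%:R * d%:R) *: (X * W).
  by move=> X; rewrite rE (scalerAr _ X W).
split; rewrite !sc; [rewrite P1 | rewrite P2 | rewrite P3 | rewrite P4 | rewrite P5] => //.
Qed.
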